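(* Let $k\ge 2$ and let $G=G_n\langle t_1,\ldots,t_k\rangle$ be a Toeplitz graph with $n\ge t_{k-1}+t_k$. Then the following are equivalent: (i) $G$ is an interval graph; (ii) $G$ is chordal; (iii) $t_i=it_1$ for every $i\in[k]$; (iv) $\omega(G)=k+1$.
   Context: For integers $n\ge 2$, $k\ge 1$ and $1\le t_1<t_2<\cdots<t_k\le n-1$, the Toeplitz graph $G_n\langle t_1,\ldots,t_k\rangle$ is the simple graph with vertex set $[n]=\{1,\ldots,n\}$ in which two distinct vertices $i,j$ are adjacent if and only if $|i-j|\in\{t_1,\ldots,t_k\}$. A hole is an induced (chordless) cycle of length at least $4$; a graph is chordal if it has no hole. A graph is an interval graph if one can assign to each vertex $v$ a real interval $I_v$ such that distinct $u,v$ are adjacent iff $I_u\cap I_v\neq\emptyset$. $\omega(G)$ is the clique number. *)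

(* Defs.v *)
From Stdlib Require Import Reals.
From mathcomp Require Import all_boot.

Set Implicit Arguments. Unset Strict Implicit. Unset Printing Implicit Defensive.

Definition absdiff (a b : nat) : nat := (a - b) + (b - a).

(* Toeplitz graph G_n<t_1,...,t_k>: the parameters are t 1, ..., t k
   (the function t is 1-indexed; values outside [1,k] are irrelevant).
   Vertex set: 'I_n, the ordinal i standing for vertex i+1 of [n]
   (adjacency depends only on differences, so this is the same graph). *)
Definition toeplitz_adj (n k : nat) (t : nat -> nat) : rel 'I_n :=
  fun i j => (i != j) && [exists l : 'I_k, t l.+1 == absdiff i j].

Arguments toeplitz_adj : clear implicits.

(* A hole: an induced cycle v_0 v_1 ... v_{m-1} v_0 with m >= 4 distinct
   vertices, where (for a <> b) v_a v_b is an edge iff a,b are cyclically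
   consecutive. *)
Definition is_hole (T : finType) (adj : rel T) (s : seq T) : Prop :=
  match s with
  | [::] => False
  | x0 :: _ =>
    [/\ uniq s, 4 <= size s &
      forall a b, a < size s -> b < size s -> a != b ->
        adj (nth x0 s a) (nth x0 s b)
        = (b == a.+1 %% size s) || (a == b.+1 %% size s)]
  end.

Definition chordal (T : finType) (adj : rel T) : Prop :=
  ~ exists s : seq T, is_hole adj s.

(* A real interval: a convex subset of R (any kind of interval). *)
Definition real_interval (I : R -> Prop) : Prop :=
  forall x y z, I x -> I z -> Rle x y -> Rle y z -> I y.

Definition interval_graph (T : finType) (adj : rel T) : Prop :=
  exists I : T -> R -> Prop,
    (forall v, real_interval (I v)) /\
    (forall u v, u != v -> (adj u v <-> exists x, I u x /\ I v x)).

Definition is_clique (T : finType) (adj : rel T) (A : {set T}) : bool :=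
  [forall x in A, forall y in A, (x != y) ==> adj x y].

Definition clique_number (T : finType) (adj : rel T) : nat :=
  \max_(A : {set T} | is_clique adj A) #|A|.

(* Main.v *)
Require Import Defs.
From Stdlib Require Import Reals Lra.
From mathcomp Require Import all_boot zify.
Set Implicit Arguments. Unset Strict Implicit. Unset Printing Implicit Defensive.

Lemma hole_of_walk (T : finType) (adj : rel T) :
  symmetric adj -> irreflexive adj ->
  forall r (f : nat -> T) v,
  adj v (f 0) -> adj v (f r) -> ~~ adj (f 0) (f r) -> f 0 != f r ->
  (forall i, i < r -> adj (f i) (f i.+1)) ->
  (forall i, 0 < i -> i < r -> (f i != v) && ~~ adj v (f i)) ->
  exists s, is_hole adj s.
Proof.
move=> sym irr; elim/ltn_ind => r IH f v h0 hr h0r ne0r step int.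
case: (boolP [exists i : 'I_r.+1, exists j : 'I_r.+1, (i.+1 < j) && adj (f i) (f j)]).
  case/existsP => -[i lti] /existsP [[j ltj]] /= /andP [lt adjij].
  pose c := j - i.+1.
  pose g m := if m <= i then f m else f (m + c).
  have cpos : 0 < c by rewrite /c; lia.
  apply: (IH (r - c) _ g v).
  - rewrite /c; lia.
  - by rewrite /g leq0n.
  - rewrite /g; case: ifP => H; first by (exfalso; move: H; rewrite /c; lia).
    by rewrite subnK //; rewrite /c; lia.
  - rewrite /g; case: ifP => H; first by (exfalso; move: H; rewrite /c; lia).
    by rewrite subnK //; rewrite /c; lia.
  - rewrite /g /= [_ <= i]leqNgt; case: ifP => H.
      by exfalso; move: H; rewrite /c; lia.
    by rewrite subnK //; rewrite /c; lia.
  - move=> m mlt; rewrite /g /=.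
    case: (ltngtP m i) => H.
    + by apply: step; lia.
    + have -> : m.+1 + c = (m + c).+1 by lia.
      apply: step; rewrite /c in mlt *; lia.
    + subst m.
      have -> : i.+1 + c = j by rewrite /c; lia.
      exact: adjij.
  - move=> m m0 mlt; rewrite /g /=; case: ifP => H.
      by apply: int => //; rewrite /c in mlt; lia.
    by apply: int; rewrite /c in mlt *; lia.
move=> nochord.
have nochord' : forall i j, j <= r -> i.+1 < j -> ~~ adj (f i) (f j).
  move=> i j jr ij; apply/negP => a; move/negP: nochord; apply.
  have hi : i < r.+1 by lia. have hj : j < r.+1 by lia.
  apply/existsP; exists (Ordinal hi).
  apply/existsP; exists (Ordinal hj).
  by rewrite /= ij.
case: (boolP [exists i : 'I_r.+1, exists j : 'I_r.+1, (i < j) && (f i == f j)]).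
  case/existsP => -[i lti] /existsP [[j ltj]] /= /andP [lt /eqP eqij].
  case: (ltnP j r) => jr.
  - by move: (nochord' i j.+1 jr); rewrite ltnS lt eqij (step j jr) => /(_ isT).
  - have {jr}jr : j = r by lia. subst j.
    have i0 : 0 < i.
      case: (posnP i) => // i0; subst i; by rewrite eqij eqxx in ne0r.
    apply: (IH i _ f v) => //; try by rewrite eqij.
    + by move=> m mi; apply: step; lia.
    + by move=> m m0 mi; apply: int; lia.
move=> noeq.
have noeq' : forall i j, i < j -> j <= r -> f i != f j.
  move=> i j ij jr; apply/negP => /eqP e; move/negP: noeq; apply.
  have hi : i < r.+1 by lia. have hj : j < r.+1 by lia.
  apply/existsP; exists (Ordinal hi).
  apply/existsP; exists (Ordinal hj).
  by rewrite /= ij e eqxx.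
have r2 : 1 < r.
  case: r {IH nochord noeq nochord' noeq'} hr h0r ne0r step int => [|[|r]] //.
  - by rewrite eqxx.
  - by move=> _ h _ st _; rewrite st in h.
have vnot : forall m, m <= r -> f m != v.
  move=> m mr; case: (posnP m) => [->|m0].
    by apply/eqP => e; move: h0; rewrite e irr.
  case: (ltngtP m r) => H; last 1 [by apply/eqP => e; move: hr; rewrite -H e irr] ;
    [by case/andP: (int m m0 H) | lia].
have sz : size (v :: mkseq f r.+1) = r.+2 by rewrite /= size_map size_iota.
exists (v :: mkseq f r.+1); split.
- rewrite cons_uniq /mkseq andbC; apply/andP; split.
    rewrite map_inj_in_uniq ?iota_uniq //.
    move=> i j; rewrite !mem_iota !add0n => /andP [_ ir] /andP [_ jr] e.
    case: (ltngtP i j) => H //.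
      by move: (noeq' i j H jr); rewrite e eqxx.
    by move: (noeq' j i H ir); rewrite e eqxx.
  apply/mapP => -[m]; rewrite mem_iota add0n => /andP [_ mr] e.
  by move: (vnot m mr); rewrite e eqxx.
- by rewrite sz; lia.
- rewrite sz.
  have key : forall a b, a < b -> b < r.+2 ->
    adj (nth v (v :: mkseq f r.+1) a) (nth v (v :: mkseq f r.+1) b) =
    (b == a.+1 %% r.+2) || (a == b.+1 %% r.+2).
    move=> [|a] [|b] // ab br.
    + rewrite /= nth_mkseq // (modn_small (_ : 1 < r.+2)) //.
      case: (ltngtP b r) => H.
      * rewrite modn_small //=.
        case: b H ab br => [|b] H _ _; first by rewrite h0.
        by apply/negbTE; case/andP: (int b.+1 erefl H).
      * lia.
      * by subst b; rewrite modnn hr orbT.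
    + rewrite /= !nth_mkseq //; try lia.
      rewrite (modn_small (_ : a.+2 < r.+2)); last by lia.
      have -> : (a.+1 == b.+2 %% r.+2) = false.
        case: (ltngtP b r) => H; first by rewrite modn_small //; lia.
        lia. by subst b; rewrite modnn.
      rewrite orbF; case: (eqVneq b a.+1) => [->|H]; first by rewrite eqxx step //; lia.
      have -> : (b.+1 == a.+2) = false by apply/negbTE; rewrite eqSS.
      by apply/negbTE; apply: nochord'; lia.
  move=> a b ar br ab.
  case: (ltngtP a b) => H.
  + exact: key.
  + by rewrite sym orbC key.
  + by rewrite H eqxx in ab.
Qed.

Definition betw (a z b : R) : Prop := (Rle a z /\ Rle z b) \/ (Rle b z /\ Rle z a).

Lemma betw_conv (I : R -> Prop) a z b : real_interval I -> I a -> I b -> betw a z b -> I z.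
Proof.
move=> cv Ia Ib [[h1 h2]|[h1 h2]]; [exact: (cv a z b) | exact: (cv b z a)].
Qed.

Lemma betw_split a z b x : betw a z b -> betw a z x \/ betw x z b.
Proof.
rewrite /betw => h.
destruct (Rle_dec a x); destruct (Rle_dec z x); destruct (Rle_dec a z);
  destruct (Rle_dec b x); destruct (Rle_dec z b); lra.
Qed.

Lemma chain (J : nat -> R -> Prop) (conv : forall j, real_interval (J j)) lo :
  forall L a b z, 0 < L -> J (lo + 1) a -> J (lo + L) b ->
  (forall j, lo < j -> j < lo + L -> exists x, J j x /\ J j.+1 x) ->
  betw a z b -> exists j, lo < j <= lo + L /\ J j z.
Proof.
elim => [//|L IH] a b z _ Ja Jb mid bt.
case: (posnP L) => [L0|Lpos].
  subst L; exists (lo + 1); split; first lia.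
  rewrite addn1 in Ja Jb *; exact: (betw_conv (conv _) Ja Jb bt).
have [x [Jx Jx']] : exists x, J (lo + L) x /\ J (lo + L).+1 x by apply: mid; lia.
case: (betw_split x bt) => h.
  have [j [hj Jz]] := IH a x z Lpos Ja Jx (fun j h1 h2 => mid j h1 (ltac:(lia))) h.
  by exists j; split => //; lia.
exists (lo + L.+1); split; first lia.
rewrite addnS in Jb *; exact: (betw_conv (conv _) Jx' Jb h).
Qed.

Lemma four_point (I0 I2 : R -> Prop) p q x' x'' :
  real_interval I0 -> real_interval I2 -> (forall x, I0 x -> I2 x -> False) ->
  I0 p -> I2 q -> I0 x' -> I2 x'' ->
  exists z, betw p z q /\ betw x' z x''.
Proof.
move=> c0 c2 dis p0 q2 x0 x2.
have nb : forall a b c, I0 a -> I0 c -> I2 b -> betw a b c -> False.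
  move=> a b c Ia Ic Ib h; exact: (dis b (betw_conv c0 Ia Ic h) Ib).
have nb2 : forall a b c, I2 a -> I2 c -> I0 b -> betw a b c -> False.
  move=> a b c Ia Ic Ib h; exact: (dis b Ib (betw_conv c2 Ia Ic h)).
destruct (Rle_dec p q) as [pq|pq].
- have h1 : (Rlt x' q).
    destruct (Rlt_le_dec x' q) as [|h] => //; exfalso; apply: (nb p q x') => //; rewrite /betw; lra.
  have h2 : (Rlt p x'').
    destruct (Rlt_le_dec p x'') as [|h] => //; exfalso; apply: (nb2 x'' p q) => //; rewrite /betw; lra.
  have h3 : (Rlt x' x'').
    destruct (Rlt_le_dec x' x'') as [|h] => //; exfalso; apply: (nb p x'' x') => //; rewrite /betw; lra.
  destruct (Rle_dec p x').
    by exists x'; rewrite /betw; split; lra.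
  by exists p; rewrite /betw; split; lra.
- have h1 : (Rlt q x').
    destruct (Rlt_le_dec q x') as [|h] => //; exfalso; apply: (nb p q x') => //; rewrite /betw; lra.
  have h2 : (Rlt x'' p).
    destruct (Rlt_le_dec x'' p) as [|h] => //; exfalso; apply: (nb2 x'' p q) => //; rewrite /betw; lra.
  have h3 : (Rlt x'' x').
    destruct (Rlt_le_dec x'' x') as [|h] => //; exfalso; apply: (nb p x'' x') => //; rewrite /betw; lra.
  destruct (Rle_dec x' p).
    by exists x'; rewrite /betw; split; lra.
  by exists p; rewrite /betw; split; lra.
Qed.

Lemma interval_chordal (T : finType) (adj : rel T) : interval_graph adj -> chordal adj.
Proof.
move=> [I [conv H]] [[|x0 s'] //].
set s := x0 :: s'; set m := size s.
move=> [un m4 hadj].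
set w := fun i => nth x0 s i.
have wne : forall i j, i < m -> j < m -> i != j -> w i != w j.
  by move=> i j im jm ij; rewrite /w nth_uniq.
have adjI : forall i j, i < m -> j < m -> i != j -> adj (w i) (w j) ->
    exists x, I (w i) x /\ I (w j) x.
  move=> i j im jm ij a; apply/(H _ _ (wne i j im jm ij)); exact: a.
have [p [p0 p1]] : exists x, I (w 0) x /\ I (w 1) x.
  apply: adjI; try lia. by rewrite /w hadj //; try lia; rewrite (modn_small (_ : 1 < m)) //; lia.
have [q [q1 q2]] : exists x, I (w 1) x /\ I (w 2) x.
  apply: adjI; try lia. by rewrite /w hadj //; try lia; rewrite (modn_small (_ : 2 < m)) //; lia.
have [a [a2 a3]] : exists x, I (w 2) x /\ I (w 3) x.
  apply: adjI; try lia. by rewrite /w hadj //; try lia; rewrite (modn_small (_ : 3 < m)) //; lia.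
have [b [bl b0]] : exists x, I (w m.-1) x /\ I (w 0) x.
  apply: adjI; try lia. rewrite /w hadj //; try lia.
  by rewrite (_ : m.-1.+1 = m); [rewrite modnn eqxx | lia].
have dis : forall x, I (w 0) x -> I (w 2) x -> False.
  move=> x h0 h2.
  have : adj (w 0) (w 2).
    apply/(H _ _ (wne 0 2 _ _ _)); [lia|lia|by []|by exists x].
  rewrite /w hadj //; try lia.
  by rewrite !modn_small //; lia.
have [z [zpq zab]] := four_point (conv _) (conv _) dis p0 q2 b0 a2.
have z1 : I (w 1) z by exact: (betw_conv (conv _) p1 q1 zpq).
have zba : betw a z b by move: zab; rewrite /betw; lra.
have [j [hj Jz]] : exists j, 2 < j <= 2 + (m - 3) /\ I (w j) z.
  apply: (chain (J := fun j => I (w j)) (fun j => conv _) (L := m - 3) (a := a) (b := b)).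
  - lia.
  - exact: a3.
  - by rewrite (_ : 2 + (m - 3) = m.-1); [|lia].
  - move=> j h1 h2; apply: adjI; try lia.
    by rewrite /w hadj //; try lia; rewrite (modn_small (_ : j.+1 < m)) ?eqxx //; lia.
  - exact: zba.
have : adj (w 1) (w j).
  apply/(H _ _ (wne 1 j _ _ _)); [lia|lia|apply/eqP; lia|by exists z].
rewrite /w hadj; try lia.
rewrite (modn_small (_ : 2 < m)) //; last lia.
case: (ltngtP j.+1 m) => hm.
- by rewrite modn_small //; lia.
- lia.
- by rewrite hm modnn; lia.
Qed.

Definition inT (k : nat) (t : nat -> nat) (x : nat) : bool := [exists l : 'I_k, t l.+1 == x].

Lemma inTP k t x : reflect (exists2 i, 1 <= i <= k & t i = x) (inT k t x).
Proof.
apply: (iffP existsP) => [[l /eqP e]|[i hi e]].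
  by exists l.+1 => //; rewrite ltn_ord.
have hl : i.-1 < k by lia.
exists (Ordinal hl) => /=; apply/eqP; rewrite -e; congr t; lia.
Qed.

Section Mono.
Variables (k : nat) (t : nat -> nat).
Hypothesis hinc : forall i, 1 <= i -> i < k -> t i < t i.+1.

Lemma tlt i j : 1 <= i -> i < j -> j <= k -> t i < t j.
Proof.
move=> hi; elim: j => [//|j IH] ij jk.
case: (ltngtP i j) => h.
- have hj : 1 <= j by lia.
  exact: (ltn_trans (IH h (ltnW jk)) (hinc hj jk)).
- lia.
- by subst j; apply: hinc.
Qed.

Lemma tle i j : 1 <= i -> i <= j -> j <= k -> t i <= t j.
Proof. move=> hi; rewrite leq_eqVlt => /orP [/eqP->//|ij] jk; exact/ltnW/tlt. Qed.

Lemma tlt_idx i j : 1 <= i <= k -> 1 <= j <= k -> t i < t j -> i < j.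
Proof.
move=> hi hj h; case: (ltnP i j) => // ji.
have := tle (j := i) (i := j); lia.
Qed.

Lemma inT_ge x : inT k t x -> t 1 <= x.
Proof. by case/inTP => i hi <-; apply: tle; lia. Qed.
Lemma inT_le x : inT k t x -> x <= t k.
Proof. by case/inTP => i hi <-; apply: tle; lia. Qed.
Lemma inT_lt x : inT k t x -> x < t k -> x <= t k.-1.
Proof.
case/inTP => i hi <- h.
have ik : i < k by apply: (tlt_idx (i := i) (j := k)) => //; lia.
apply: tle; lia.
Qed.
Lemma inT_t i : 1 <= i <= k -> inT k t (t i).
Proof. by move=> h; apply/inTP; exists i. Qed.

End Mono.

Lemma toep_sym n k t : symmetric (toeplitz_adj n k t).
Proof. by move=> u v; rewrite /toeplitz_adj eq_sym /absdiff addnC. Qed.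
Lemma toep_irr n k t : irreflexive (toeplitz_adj n k t).
Proof. by move=> u; rewrite /toeplitz_adj eqxx. Qed.

Lemma toep_adjE n k t (u v : 'I_n) :
  toeplitz_adj n k t u v = (nat_of_ord u != nat_of_ord v) && inT k t (absdiff u v).
Proof. by []. Qed.

Lemma rhombus_hole n k t a b : 0 < a -> a < b -> inT k t a -> inT k t b ->
  ~~ inT k t (b - a) -> ~~ inT k t (a + b) -> a + b < n ->
  exists s, is_hole (toeplitz_adj n k t) s.
Proof.
case: n => [|n'] // a0 ab ia ib nd ns sn.
pose f m : 'I_n'.+1 := inord (if m == 0 then a else if m == 1 then a + b else b).
have fv : forall m, nat_of_ord (f m) = (if m == 0 then a else if m == 1 then a + b else b).
  by move=> m; rewrite /f inordK //; case: ifP => _; [|case: ifP => _]; lia.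
apply: (@hole_of_walk _ _ (@toep_sym _ _ _) (@toep_irr _ _ _) 2 f ord0).
- by rewrite toep_adjE fv /= /absdiff; apply/andP; split; [lia|rewrite (_ : _ + _ = a) //; lia].
- by rewrite toep_adjE fv /= /absdiff; apply/andP; split; [lia|rewrite (_ : _ + _ = b) //; lia].
- by rewrite toep_adjE !fv /= /absdiff negb_and (_ : _ + _ = b - a) ?nd ?orbT //; lia.
- by apply/negP => /eqP /(congr1 (@nat_of_ord _)); rewrite !fv /=; lia.
- move=> [|[|i]] // _; rewrite toep_adjE !fv /= /absdiff; apply/andP; split; try lia.
    by rewrite (_ : _ + _ = b) //; lia.
  by rewrite (_ : _ + _ = a) //; lia.
- move=> [|[|i]] // _ _; rewrite toep_adjE fv /= /absdiff; apply/andP; split.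
    by apply/negP => /eqP /(congr1 (@nat_of_ord _)); rewrite fv /=; lia.
  by rewrite negb_and (_ : _ + _ = a + b) ?ns ?orbT //; lia.
Qed.

Lemma cyclic_hole n k t a b : 0 < a -> a < b -> b != 2 * a -> a + b <= n ->
  inT k t a -> inT k t b ->
  (forall x, 0 < x -> x < a + b -> inT k t x -> (x == a) || (x == b)) ->
  exists s, is_hole (toeplitz_adj n k t) s.
Proof.
case: n => [|n']; first by lia.
move=> a0 ab b2a abn ia ib only.
set N := a + b.
have NE : N = a + b by [].
move: N NE => N NE.
pose x m := (m.+1 * a) %% N.
have Npos : 0 < N by lia.
have xlt : forall m, x m < N by move=> m; rewrite /x ltn_pmod.
have stepE : forall m, x m.+1 = if x m + a < N then x m + a else x m + a - N.
  move=> m; have -> : x m.+1 = (x m + a) %% N by rewrite /x modnDml mulSn addnC.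
  have := xlt m; case: ifP => h hm; first by rewrite modn_small.
  have -> : x m + a = (x m + a - N) + N by lia.
  by rewrite modnDr modn_small //; lia.
have x0 : x 0 = a by rewrite /x mul1n modn_small //; lia.
have ex : exists m, x m == b.
  exists (N - 2); apply/eqP; rewrite /x.
  have -> : (N - 2).+1 * a = (a - 1) * N + b by rewrite NE; nia.
  by rewrite modnMDl modn_small //; lia.
pose r := ex_minn ex.
have xr : x r = b by apply/eqP; rewrite /r; case: ex_minnP.
have rmin : forall m, x m == b -> r <= m by rewrite /r; case: ex_minnP.
have xnb : forall m, m < r -> x m != b.
  by move=> m mr; apply/negP => /rmin; lia.
have xn0 : forall m, 0 < m -> m < r -> x m != 0.
  move=> [|m] // _ mr; rewrite stepE; apply/negP => /eqP.
  have := xnb m (ltnW mr); have := xlt m; case: ifP => h; lia.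
have xna : forall m, 0 < m -> m < r -> x m != a.
  move=> [|m] // _ mr; rewrite stepE; apply/negP => /eqP.
  have := xlt m; case: (posnP m) => [->|mp]; first by rewrite x0; case: ifP => h; lia.
  have := xn0 m mp (ltnW mr); case: ifP => h; lia.
have xbd : forall m, x m < n'.+1 by move=> m; have := xlt m; lia.
pose f m : 'I_n'.+1 := inord (x m).
have fv : forall m, nat_of_ord (f m) = x m by move=> m; rewrite /f inordK.
have adj0 : forall y : 'I_n'.+1, 0 < y -> toeplitz_adj n'.+1 k t ord0 y = inT k t y.
  move=> y y0; rewrite toep_adjE /= /absdiff (_ : _ + _ = y) //; last by lia.
  by case: (nat_of_ord y) y0.
apply: (@hole_of_walk _ _ (@toep_sym _ _ _) (@toep_irr _ _ _) r f ord0).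
- by rewrite adj0 fv ?x0.
- by rewrite adj0 fv ?xr //; lia.
- rewrite toep_adjE !fv x0 xr /absdiff (_ : _ + _ = b - a); last by lia.
  rewrite negb_and; apply/orP; right; apply/negP => h.
  have h1 : 0 < b - a by lia. have h2 : b - a < N by lia.
  by case/orP: (only _ h1 (ltac:(lia)) h) => /eqP; lia.
- by apply/negP => /eqP /(congr1 (@nat_of_ord _)); rewrite !fv x0 xr; lia.
- move=> i ir; rewrite toep_adjE !fv stepE; have := xlt i.
  case: ifP => h hi; apply/andP; split; try lia.
    by rewrite /absdiff (_ : _ + _ = a) //; lia.
  by rewrite /absdiff (_ : _ + _ = b) //; lia.
- move=> i i0 ir; have h0 := xn0 i i0 ir.
  have ha := xna i i0 ir; have hb := xnb i ir.
  rewrite adj0 ?fv; last by lia.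
  apply/andP; split.
    by apply/negP => /eqP /(congr1 (@nat_of_ord _)); rewrite fv /=; lia.
  apply/negP => h; have hx := xlt i.
  have h1 : 0 < x i by lia. have h2 : x i < a + b by lia.
  by case/orP: (only _ h1 h2 h) => /eqP; lia.
Qed.

Lemma notiii_hole n k t : 2 <= k -> 1 <= t 1 ->
  (forall i, 1 <= i -> i < k -> t i < t i.+1) ->
  t k <= n - 1 -> t k.-1 + t k <= n ->
  ~ (forall i, 1 <= i <= k -> t i = i * t 1) ->
  exists s, is_hole (toeplitz_adj n k t) s.
Proof.
move=> k2 t1 hinc tkn tsum notiii.
have ex : exists i, (1 <= i <= k) && (t i != i * t 1).
  case: (boolP [exists i : 'I_k.+1, (1 <= i) && (t i != i * t 1)]) => [/existsP [i hi]|/existsPn H].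
    exists i; case/andP: hi => -> ->; by rewrite -ltnS ltn_ord.
  exfalso; apply: notiii => i /andP [i1 ik].
  have ik' : i < k.+1 by lia.
  by move: (H (Ordinal ik')); rewrite /= i1 /= negbK => /eqP.
have [j /andP [/andP [j1 jk] tj] jmin] := ex_minnP ex.
have jm : forall i, 1 <= i -> i < j -> t i = i * t 1.
  move=> i i1 ij; case: (eqVneq (t i) (i * t 1)) => // h.
  have ik : i <= k by lia.
  by have := jmin i; rewrite i1 h ik /= => /(_ isT); lia.
have j2 : 2 <= j by case: j j1 tj {jmin jm jk} => [|[|j]] //; rewrite mul1n eqxx.
have Tlt := tlt hinc; have Tle := tle hinc.
have inT_ge := inT_ge hinc; have inT_le := inT_le hinc; have inT_lt := inT_lt hinc.
have Tin : forall i, 1 <= i <= k -> inT k t (t i) by move=> i hi; apply/inTP; exists i.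
have NJ : ~~ inT k t (t j - t 1).
  apply/negP => /inTP [i hi e].
  have t1j : t 1 < t j by apply: Tlt; lia.
  have ij : i < j by apply: (tlt_idx hinc hi) => //; lia.
  have ti := jm i ltac:(lia) ij.
  have e1 : i.+1 * t 1 = i * t 1 + t 1 by rewrite mulSn addnC.
  case: (ltngtP i.+1 j) => h.
  - have := jm i.+1 ltac:(lia) h; have := Tlt i.+1 j ltac:(lia) h jk; lia.
  - lia.
  - by subst j; lia.
have tpos : forall i, 1 <= i <= k -> 0 < t i by move=> i hi; have := Tle 1 i; lia.
have bigNot : forall x, t k < x -> ~~ inT k t x by move=> x h; apply/negP => /inT_le; lia.
have smallNot : forall x, 0 < x -> x < t 1 -> ~~ inT k t x by move=> x h h'; apply/negP => /inT_ge; lia.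
have tk1 : t 1 < t k by apply: Tlt; lia.
have cyc : (k == 2) || ((k == 3) && (t 3 == t 1 + t 2)) -> exists s, is_hole (toeplitz_adj n k t) s.
  move=> hk.
  have j2' : j = 2.
    case/orP: hk => [/eqP hk|/andP [/eqP hk /eqP h3]]; first lia.
    case: (ltngtP j 3) => h; try lia.
    have t2 := jm 2 isT ltac:(lia).
    by subst j; lia.
  subst j.
  have t12 : t 1 < t 2 by apply: Tlt; lia.
  apply: (@cyclic_hole _ _ _ (t 1) (t 2)) => //.
  - by case/orP: hk => [/eqP hk|/andP [/eqP hk /eqP h3]]; subst k; simpl in tsum; lia.
  - by apply: Tin; lia.
  - by apply: Tin; lia.
  - move=> x x0 xs /inTP [i hi e]; subst x.
    case/orP: hk => [/eqP hk|/andP [/eqP hk /eqP h3]]; subst k.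
      by case: i hi {xs x0} => [|[|[|i]]] //; rewrite eqxx ?orbT.
    case: i hi xs {x0} => [|[|[|[|i]]]] hi xs //; rewrite ?eqxx ?orbT //; exfalso; lia.
case: (boolP ((k == 2) || ((k == 3) && (t 3 == t 1 + t 2)))) => [hk|hk]; first exact: cyc.
have k3 : 3 <= k by move: hk; case: (eqVneq k 2) => [->|h _] //; lia.
have rh := @rhombus_hole n k t.
have tkm1 : t 1 < t k.-1 by apply: Tlt; lia.
have tkk : t k.-1 < t k by apply: Tlt; lia.
case: (ltngtP j k.-1) => jk1.
-
  have tjk1 : t j < t k.-1 by apply: Tlt; lia.
  have t1j : t 1 < t j by apply: Tlt; lia.
  case: (boolP (inT k t (t k - t j))) => h1; last first.
    apply: (rh (t j) (t k)); try lia; try (apply: Tin; lia) => //.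
    by apply: bigNot; lia.
  case: (boolP (inT k t (t k - t 1))) => h2; last first.
    apply: (rh (t 1) (t k)); try lia; try (apply: Tin; lia) => //.
    by apply: bigNot; lia.
  case: (ltngtP (t 1 + t j) (t k)) => hs.
  +
    have wle := inT_lt _ h2 ltac:(lia).
    apply: (rh (t k - t j) (t k - t 1)); try lia => //.
    * by rewrite (_ : _ - _ = t j - t 1) //; lia.
    * by apply: bigNot; lia.
  + apply: (rh (t 1) (t j)); try lia; try (apply: Tin; lia) => //.
    by apply: bigNot; lia.
  + apply: (rh (t j) (t k.-1)); try lia; try (apply: Tin; lia) => //.
    * by apply: smallNot; lia.
    * by apply: bigNot; lia.
-
  have jE : j = k by lia.
  subst j.
  apply: (rh (t 1) (t k)); try lia; try (apply: Tin; lia) => //.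
  by apply: bigNot; lia.
-
  subst j.
  case: (eqVneq (t 1 + t k.-1) (t k)) => hs.
  + have k4 : 4 <= k.
      case: (ltngtP k 3) => h; try lia.
      by subst k; move: hk; rewrite /= -hs eqxx.
    have t2 : t 2 = 2 * t 1 by apply: jm; lia.
    have t2k : t 2 < t k.-1 by apply: Tlt; lia.
    apply: (rh (t 2) (t k)); try lia; try (apply: Tin; lia) => //.
    * by rewrite (_ : _ - _ = t k.-1 - t 1) //; lia.
    * by apply: bigNot; lia.
  + apply: (rh (t 1) (t k.-1)); try lia; try (apply: Tin; lia) => //.
    apply/negP => h; have h1 := inT_le _ h.
    have h2 : t 1 + t k.-1 < t k by lia.
    have := inT_lt _ h h2; lia.
Qed.

Section IntRep.
Variables (n k : nat) (t : nat -> nat).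
Hypothesis t1 : 1 <= t 1.
Hypothesis ap : forall i, 1 <= i <= k -> t i = i * t 1.

Let d := t 1.
Let N := n + k + 1.
Definition cc (v : nat) := N * (v %% d) + v %/ d.

Lemma inT_ap x : inT k t x = [exists i : 'I_k, x == i.+1 * d].
Proof.
apply/existsP/existsP => -[i /eqP e]; exists i; apply/eqP; have := ltn_ord i.
  by move=> ik; rewrite -e ap.
by move=> ik; rewrite e ap //; lia.
Qed.

Lemma key_lt (u v : nat) : u < v -> v < n ->
  inT k t (v - u) = (cc v <= cc u + k) && (cc u <= cc v + k).
Proof.
move=> uv vn; have dpos : 0 < d by [].
rewrite inT_ap.
have eu := divn_eq u d; have ev := divn_eq v d.
have ru := ltn_pmod u dpos; have rv := ltn_pmod v dpos.
have qu : u %/ d <= u := leq_div u d.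
have qv : v %/ d <= v := leq_div v d.
rewrite /cc.
apply/existsP/idP => [[i /eqP e]|/andP [h1 h2]].
  have ik := ltn_ord i.
  have vE : v = i.+1 * d + u by lia.
  have -> : v %% d = u %% d by rewrite vE modnMDl.
  have -> : v %/ d = i.+1 + u %/ d by rewrite vE divnMDl.
  apply/andP; split; lia.
have rE : v %% d = u %% d.
  case: (ltngtP (v %% d) (u %% d)) => // h.
  - have : N * (v %% d) + N <= N * (u %% d) by rewrite addnC -mulnS leq_mul2l h orbT.
    have : n + k < N by rewrite /N; lia.
    move=> hN hm; exfalso; clear eu ev.
    set A := N * (v %% d) in h1 h2 hm; set B := N * (u %% d) in h1 h2 hm.
    set QU := u %/ d in h1 h2 qu; set QV := v %/ d in h1 h2 qv.
    clearbody A B QU QV; lia.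
  - have : N * (u %% d) + N <= N * (v %% d) by rewrite addnC -mulnS leq_mul2l h orbT.
    have : n + k < N by rewrite /N; lia.
    move=> hN hm; exfalso; clear eu ev.
    set A := N * (v %% d) in h1 h2 hm; set B := N * (u %% d) in h1 h2 hm.
    set QU := u %/ d in h1 h2 qu; set QV := v %/ d in h1 h2 qv.
    clearbody A B QU QV; lia.
rewrite rE in h1 h2 ev.
have quv : u %/ d < v %/ d.
  rewrite ltnNge; apply/negP => h.
  have : v %/ d * d <= u %/ d * d by rewrite leq_mul2r h orbT.
  lia.
have hi : (v %/ d - u %/ d).-1 < k by lia.
exists (Ordinal hi); apply/eqP => /=.
rewrite (_ : (v %/ d - u %/ d).-1.+1 = v %/ d - u %/ d); last by lia.
rewrite mulnBl; lia.
Qed.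

Lemma iii_interval : interval_graph (toeplitz_adj n k t).
Proof.
exists (fun (v : 'I_n) x => Rle (INR (cc v)) x /\ Rle x (INR (cc v + k))).
split.
  by move=> v x y z [h1 h2] [h3 h4] hxy hyz; split; lra.
move=> u v uv.
have hint : (exists x, (Rle (INR (cc u)) x /\ Rle x (INR (cc u + k))) /\
                       (Rle (INR (cc v)) x /\ Rle x (INR (cc v + k))))
            <-> (cc u <= cc v + k) && (cc v <= cc u + k).
  split.
    move=> [x [[a b] [c e]]]; apply/andP; split; apply/leP; apply: INR_le; lra.
  case/andP => h1 h2; exists (INR (maxn (cc u) (cc v))).
  by split; split; apply: le_INR; apply/leP; lia.
rewrite hint toep_adjE.
have uv' : nat_of_ord u != nat_of_ord v by [].
rewrite uv' /=.
case: (ltngtP u v) => h.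
- by rewrite /absdiff (_ : _ + _ = v - u) ?key_lt //; [rewrite andbC | lia].
- by rewrite /absdiff (_ : _ + _ = u - v) ?key_lt //; lia.
- by move: uv'; rewrite h eqxx.
Qed.

End IntRep.

Lemma diffs_ap k t : 1 <= t 1 -> (forall i, 1 <= i -> i < k -> t i < t i.+1) ->
  (forall i j, 1 <= i -> i < j -> j <= k -> inT k t (t j - t i)) ->
  forall i, 1 <= i <= k -> t i = i * t 1.
Proof.
move=> t1 hinc hd.
have Tlt := tlt hinc; have Tle := tle hinc.
have ge := inT_ge hinc; have lt := inT_lt hinc.
have claim : forall j, 2 <= j <= k -> t j - t 1 = t j.-1.
  move=> j hj.
  have P : forall e, 1 <= e -> e <= j.-1 -> t e <= t j - t (j - e).
    elim=> [//|e IH] _ he.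
    case: (posnP e) => [->|e0].
      by have := ge _ (hd (j - 1) j ltac:(lia) ltac:(lia) ltac:(lia)); lia.
    have IH' := IH e0 ltac:(lia).
    have hx := hd (j - e.+1) j ltac:(lia) ltac:(lia) ltac:(lia).
    have h1 : t (j - e.+1) < t (j - e) by apply: Tlt; lia.
    have h0 : t (j - e) < t j by apply: Tlt; lia.
    case/inTP: hx => l hl e'.
    have el : e < l by apply: (tlt_idx hinc (i := e) (j := l)); lia.
    have := Tle e.+1 l ltac:(lia) el ltac:(lia); lia.
  have h1 := P j.-1 ltac:(lia) (leqnn _).
  rewrite (_ : j - j.-1 = 1) in h1; last lia.
  have hx := hd 1 j (leqnn _) ltac:(lia) ltac:(lia).
  have h2 : t 1 < t j by apply: Tlt; lia.
  case/inTP: hx => l hl e.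
  have lj : l < j by apply: (tlt_idx hinc (i := l) (j := j)); lia.
  have := Tle l j.-1 ltac:(lia) ltac:(lia) ltac:(lia); lia.
elim=> [//|i IH] hi.
case: (posnP i) => [->|i0]; first by rewrite mul1n.
have := claim i.+1 ltac:(lia); rewrite IH ?mulSn; lia.
Qed.

Section Clique.
Variables (n k : nat) (t : nat -> nat).
Local Notation G := (toeplitz_adj n k t).

Lemma cliqueP (A : {set 'I_n}) : is_clique G A ->
  forall x y, x \in A -> y \in A -> x != y -> G x y.
Proof.
move=> /forallP h x y xA yA xy.
by have := h x; rewrite xA /= => /forallP /(_ y); rewrite yA /= xy.
Qed.

Lemma clique_sub (A : {set 'I_n}) v0 : is_clique G A -> v0 \in A ->
  (forall w, w \in A -> v0 <= w) ->
  A :\ v0 \subset [set insubd v0 (v0 + t l.+1) | l : 'I_k].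
Proof.
move=> cA v0A v0min; apply/subsetP => w /setD1P [wv0 wA].
have := cliqueP cA v0A wA; rewrite eq_sym wv0 => /(_ isT).
rewrite toep_adjE => /andP [_ /existsP [l /eqP e]].
apply/imsetP; exists l => //; apply: val_inj.
have := v0min w wA; have := ltn_ord w; rewrite val_insubd /absdiff in e *.
move=> wn vw; rewrite ifT /=; lia.
Qed.

Lemma clique_le (A : {set 'I_n}) : is_clique G A -> #|A| <= k.+1.
Proof.
move=> cA; case: (set_0Vmem A) => [->|[x0 x0A]]; first by rewrite cards0.
case: (arg_minnP (fun v : 'I_n => nat_of_ord v) x0A) => v0 v0A' v0min.
have v0A : v0 \in A by exact: v0A'.
rewrite (cardsD1 v0) v0A add1n ltnS.
apply: leq_trans (subset_leq_card (clique_sub cA v0A v0min)) _.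
by apply: leq_trans (leq_imset_card _ _) _; rewrite card_ord.
Qed.

Lemma clique_big (A : {set 'I_n}) : 1 <= t 1 -> (forall i, 1 <= i -> i < k -> t i < t i.+1) ->
  is_clique G A -> #|A| = k.+1 -> forall i, 1 <= i <= k -> t i = i * t 1.
Proof.
move=> t1 hinc cA cardA.
have [x0 x0A] : exists x, x \in A.
  by apply/set0Pn; apply/negP => /eqP e; rewrite e cards0 in cardA.
case: (arg_minnP (fun v : 'I_n => nat_of_ord v) x0A) => v0 v0A' v0min.
have v0A : v0 \in A by exact: v0A'.
have sub := clique_sub cA v0A v0min.
set S := [set _ | _ in _] in sub.
have cS : #|S| <= k by apply: leq_trans (leq_imset_card _ _) _; rewrite card_ord.
have cAv : #|A :\ v0| = k by move: cardA; rewrite (cardsD1 v0) v0A add1n => -[].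
have /eqP AS : A :\ v0 == S.
  by rewrite -(subset_leqif_cards sub).2 eqn_leq subset_leq_card // cAv.
have inA : forall l : 'I_k, v0 + t l.+1 < n /\ exists2 w, w \in A & nat_of_ord w = v0 + t l.+1.
  move=> l.
  have : insubd v0 (v0 + t l.+1) \in A :\ v0 by rewrite AS; apply/imsetP; exists l.
  case/setD1P => ne inA'.
  have hl : v0 + t l.+1 < n.
    rewrite ltnNge; apply/negP => h; move: ne.
    rewrite (_ : insubd v0 (v0 + t l.+1) = v0) ?eqxx //.
    by apply: val_inj; rewrite val_insubd ifF //; apply/negbTE; rewrite -leqNgt.
  split => //; exists (insubd v0 (v0 + t l.+1)) => //; by rewrite val_insubd ifT.
apply: diffs_ap => // i j i1 ij jk.
have hi : i.-1 < k by lia. have hj : j.-1 < k by lia.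
have [_ [wi wiA ei]] := inA (Ordinal hi).
have [_ [wj wjA ej]] := inA (Ordinal hj).
rewrite /= (_ : i.-1.+1 = i) in ei; last lia.
rewrite /= (_ : j.-1.+1 = j) in ej; last lia.
have tij : t i < t j by apply: (tlt hinc); lia.
have := cliqueP cA wiA wjA.
have ne : wi != wj by apply/negP => /eqP e; rewrite e ej in ei; lia.
move=> /(_ ne); rewrite toep_adjE => /andP [_].
by rewrite /absdiff ei ej (_ : _ + _ = t j - t i) //; lia.
Qed.

End Clique.

Lemma iii_clique n k t : 1 <= k -> 1 <= t 1 -> t k <= n - 1 ->
  (forall i, 1 <= i <= k -> t i = i * t 1) ->
  exists2 A : {set 'I_n}, is_clique (toeplitz_adj n k t) A & #|A| = k.+1.
Proof.
move=> k1 t1 tk ap.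
case: n tk => [|n'] tk.
  by exfalso; have := ap k ltac:(lia); nia.
have tkE : t k = k * t 1 by apply: ap; lia.
have bnd : forall i : 'I_k.+1, i * t 1 < n'.+1.
  move=> i; have ik := ltn_ord i.
  have : i * t 1 <= k * t 1 by rewrite leq_mul2r; apply/orP; right; lia.
  lia.
pose g (i : 'I_k.+1) : 'I_n'.+1 := inord (i * t 1).
have gv : forall i, nat_of_ord (g i) = i * t 1 by move=> i; rewrite /g inordK.
have ginj : injective g.
  move=> i j /(congr1 (@nat_of_ord _)); rewrite !gv => /eqP.
  by rewrite eqn_pmul2r // => /eqP /val_inj.
exists (g @: 'I_k.+1); last by rewrite card_imset // card_ord.
apply/forallP => x; apply/implyP => /imsetP [i _ ->].
apply/forallP => y; apply/implyP => /imsetP [j _ ->].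
apply/implyP => ne; rewrite toep_adjE !gv.
have ij : nat_of_ord i != nat_of_ord j by apply: contraNneq ne => /val_inj ->.
apply/andP; split.
  by apply: contraNneq ij => /eqP; rewrite eqn_pmul2r.
apply/existsP.
wlog lt : i j ne ij / i < j.
  move=> W; case: (ltngtP i j) => h.
  - exact: W.
  - rewrite /absdiff addnC; apply: (W j i); rewrite 1?eq_sym //.
  - by rewrite h eqxx in ij.
have hl : (j - i).-1 < k by have := ltn_ord j; lia.
exists (Ordinal hl); apply/eqP => /=.
rewrite (_ : (j - i).-1.+1 = j - i); last lia.
rewrite ap; last by have := ltn_ord j; lia.
rewrite /absdiff mulnBl.
have : i * t 1 < j * t 1 by rewrite ltn_pmul2r.
lia.
Qed.

Lemma clique_number_iff n k t : 1 <= k -> 1 <= t 1 -> t k <= n - 1 ->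
  (forall i, 1 <= i -> i < k -> t i < t i.+1) ->
  (forall i, 1 <= i <= k -> t i = i * t 1) <-> clique_number (toeplitz_adj n k t) = k.+1.
Proof.
move=> k1 t1 tk hinc; split => [ap|cn].
  apply/eqP; rewrite eqn_leq; apply/andP; split.
    by apply/bigmax_leqP => A /clique_le.
  have [A cA <-] := iii_clique k1 t1 tk ap.
  exact: leq_bigmax_cond.
have ne : 0 < #|[pred A : {set 'I_n} | is_clique (toeplitz_adj n k t) A]|.
  apply/card_gt0P; exists set0; rewrite inE.
  by apply/forallP => x; rewrite inE.
have [A cA e] := eq_bigmax_cond (fun A : {set 'I_n} => #|A|) ne.
apply: (clique_big t1 hinc cA).
by rewrite -e -cn.
Qed.


Theorem theorem3p3 (n k : nat) (t : nat -> nat) :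
  2 <= k ->
  1 <= t 1 ->
  (forall i, 1 <= i -> i < k -> t i < t i.+1) ->
  t k <= n - 1 ->
  t k.-1 + t k <= n ->
  let G := toeplitz_adj n k t in
  (interval_graph G <-> chordal G) /\
  (chordal G <-> (forall i, 1 <= i <= k -> t i = i * t 1)) /\
  ((forall i, 1 <= i <= k -> t i = i * t 1) <-> clique_number G = k.+1).
Proof.
move=> k2 t1 hinc tkn tsum G.
have int_ch : interval_graph G -> chordal G by apply: interval_chordal.
have ch_iii : chordal G -> forall i, 1 <= i <= k -> t i = i * t 1.
  move=> ch.
  case: (boolP [forall i : 'I_k.+1, (1 <= i) ==> (t i == i * t 1)]) => [/forallP H|H].
    move=> i /andP [i1 ik]; have ik' : i < k.+1 by lia.
    by have := H (Ordinal ik'); rewrite /= i1 => /eqP.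
  exfalso; apply: ch; apply: (notiii_hole k2 t1 hinc tkn tsum) => ap.
  move/negP: H; apply; apply/forallP => i; apply/implyP => i1; apply/eqP; apply: ap.
  by rewrite i1 -ltnS ltn_ord.
have iii_int : (forall i, 1 <= i <= k -> t i = i * t 1) -> interval_graph G.
  by move=> ap; apply: iii_interval.
split; first by split => [/int_ch //|/ch_iii /iii_int].
split; first by split => [/ch_iii //|/iii_int /int_ch].
apply: clique_number_iff => //; lia.
Qed.
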